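(* Consider the second-order Kuramoto model with bonding force $$\dot\theta_i=\omega_i,\qquad \dot\omega_i=\frac{1}{N}\sum_{j=1}^N\big[\kappa_0\cos(\theta_j-\theta_i)+\kappa_1\big](\omega_j-\omega_i)+\frac{\kappa_2}{N}\sum_{j=1}^N\big[|\theta_j-\theta_i|-\theta^\infty_{ij}\big]\operatorname{sgn}(\theta_j-\theta_i),\quad i\in[N].$$ Suppose $(\Theta^0,W^0)\in\mathcal{S}$, $\mathcal{E}(0)<\frac{\kappa_2(\min_{i\ne j}\theta^\infty_{ij})^2}{2N}$, $\kappa_0\cos\mathcal{U}+\kappa_1>0$, $\kappa_2>0$, and let $\{(\theta_i,\omega_i)\}$ be a global smooth solution. Then: (i) $\lim_{t\to\infty}\max_{i,j}|\dot\theta_j(t)-\dot\theta_i(t)|=0$; (ii) if $\sum_{i=1}^N\omega_i^0=0$, then $\lim_{t\to\infty}\max_{1\le i\le N}|\omega_i(t)|=0$.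
   Context: $N\ge2$, $\kappa_0,\kappa_1\ge0$; $[\theta^\infty_{ij}]$ real symmetric with zero diagonal; $\operatorname{sgn}$ the sign function; $\omega_i^0=\omega_i(0)$. $\mathcal{E}:=\frac12\sum_i|\omega_i|^2+\frac{\kappa_2}{4N}\sum_{i,j}(|\theta_j-\theta_i|-\theta^\infty_{ij})^2$; $\mathcal{U}:=\max_{i\ne j}\theta^\infty_{ij}+\sqrt{2N\mathcal{E}(0)/\kappa_2}$; $\mathcal{S}:=\{(\Theta,W)\in\mathbb{R}^{2N}:|\theta_i-\theta_j|<\mathcal{U}<\pi\ \forall i,j\}$. *)

(* Defs.v *)
From HB Require Import structures.
From mathcomp Require Import all_boot all_order all_algebra.
From mathcomp Require Import all_classical all_reals all_analysis.
Set Implicit Arguments. Unset Strict Implicit. Unset Printing Implicit Defensive.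
Import Order.TTheory GRing.Theory Num.Theory.
Import numFieldNormedType.Exports.
Local Open Scope ring_scope.

Section Kuramoto.
Variables (R : realType) (N : nat).

Definition maxall (A : 'I_N -> 'I_N -> R) : R :=
  \big[Num.max/0]_(i < N) \big[Num.max/0]_(j < N) A i j.
Definition minall (A : 'I_N -> 'I_N -> R) : R :=
  \big[Num.min/0]_(i < N) \big[Num.min/0]_(j < N) A i j.

(* max_{i <> j} A i j and min_{i <> j} A i j (well defined for N >= 2:
   the default value is dominated / dominating) *)
Definition max_offdiag (A : 'I_N -> 'I_N -> R) : R :=
  \big[Num.max/minall A]_(i < N) \big[Num.max/minall A]_(j < N | i != j) A i j.
Definition min_offdiag (A : 'I_N -> 'I_N -> R) : R :=
  \big[Num.min/maxall A]_(i < N) \big[Num.min/maxall A]_(j < N | i != j) A i j.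

Definition energy (k2 : R) (thinf : 'I_N -> 'I_N -> R)
  (theta omega : 'I_N -> R -> R) (t : R) : R :=
  2^-1 * (\sum_(i < N) (omega i t) ^+ 2)
  + k2 / (4 * N%:R) *
    (\sum_(i < N) \sum_(j < N)
        (`|theta j t - theta i t| - thinf i j) ^+ 2).

Definition Ubound (k2 : R) (thinf : 'I_N -> 'I_N -> R)
  (theta omega : 'I_N -> R -> R) : R :=
  max_offdiag thinf
  + Num.sqrt (2 * N%:R * energy k2 thinf theta omega 0 / k2).

Definition kuramoto_rhs (k0 k1 k2 : R) (thinf : 'I_N -> 'I_N -> R)
  (theta omega : 'I_N -> R -> R) (i : 'I_N) (t : R) : R :=
  N%:R^-1 * (\sum_(j < N) (k0 * cos (theta j t - theta i t) + k1)
                           * (omega j t - omega i t))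
  + k2 / N%:R * (\sum_(j < N) (`|theta j t - theta i t| - thinf i j)
                              * Num.sg (theta j t - theta i t)).

Definition max_diff (x : 'I_N -> R) : R :=
  \big[Num.max/0]_(i < N) \big[Num.max/0]_(j < N) `|x j - x i|.
Definition max_abs (x : 'I_N -> R) : R :=
  \big[Num.max/0]_(i < N) `|x i|.

End Kuramoto.

(* Main.v *)
Require Import Defs.
From HB Require Import structures.
From mathcomp Require Import all_boot all_order all_algebra.
From mathcomp Require Import all_classical all_reals all_analysis.
From mathcomp Require Import ring lra.
Import Order.TTheory GRing.Theory Num.Theory.
Import numFieldNormedType.Exports.
Local Open Scope ring_scope.
Local Open Scope classical_set_scope.

Section Generic.
Context {R : realType}.

Lemma cvg_bigsum {T} (F : set_system T) {FF : Filter F} (I : Type) (s : seq I)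
  (h : I -> T -> R) (l : I -> R) :
  (forall i, h i @ F --> l i) ->
  (fun x => \sum_(i <- s) h i x) @ F --> \sum_(i <- s) l i.
Proof.
move=> H; elim: s => [|a s IH].
  under eq_fun do rewrite big_nil.
  by rewrite big_nil; exact: cvg_cst.
under eq_fun do rewrite big_cons.
by rewrite big_cons; apply: cvgD.
Qed.

Lemma sum_antisym n (F : 'I_n -> 'I_n -> R) :
  (forall i j, F j i = - F i j) -> \sum_i \sum_j F i j = 0.
Proof.
move=> H.
have e : \sum_i \sum_j F i j = - \sum_i \sum_j F i j.
  rewrite {1}exchange_big /= -sumrN; apply: eq_bigr => j _.
  by rewrite -sumrN; apply: eq_bigr => i _; exact: H.
lra.
Qed.

Lemma mono_deriv (f f' : R -> R) (x y : R) : x <= y ->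
  (forall s, x < s < y -> is_derive s 1 f (f' s) /\ f' s <= 0) ->
  {within `[x, y], continuous f} -> f y <= f x.
Proof.
move=> xy H cf.
apply: (@ler0_derive1_le_cc _ f x y) => //.
- by move=> s; rewrite in_itv /= => /H [hd _]; exact: ex_derive.
- move=> s; rewrite in_itv /= => /H [hd h]; rewrite derive1E.
  by rewrite derive_val.
- by rewrite in_itv /= lexx xy.
- by rewrite in_itv /= lexx xy.
Qed.

End Generic.
Section Main.
Variables (R : realType) (N : nat) (k0 k1 k2 : R)
  (thinf : 'I_N -> 'I_N -> R) (theta omega : 'I_N -> R -> R).
Hypothesis hN : (2 <= N)%N.
Hypothesis hk0 : 0 <= k0.
Hypothesis hk1 : 0 <= k1.
Hypothesis hsym : forall i j, thinf i j = thinf j i.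
Hypothesis hdiag : forall i, thinf i i = 0.
Hypothesis hth0 : forall i, theta i x @[x --> 0^'+] --> theta i 0.
Hypothesis hom0 : forall i, omega i x @[x --> 0^'+] --> omega i 0.
Hypothesis hdth : forall (i : 'I_N) (t : R), 0 < t -> is_derive t 1 (theta i) (omega i t).
Hypothesis hdom : forall (i : 'I_N) (t : R), 0 < t ->
     is_derive t 1 (omega i) (kuramoto_rhs k0 k1 k2 thinf theta omega i t).
Hypothesis hS : forall i j, `|theta i 0 - theta j 0| < Ubound k2 thinf theta omega.
Hypothesis hUpi : Ubound k2 thinf theta omega < pi.
Hypothesis hE0 : energy k2 thinf theta omega 0 < k2 * (min_offdiag thinf) ^+ 2 / (2 * N%:R).
Hypothesis hpos : 0 < k0 * cos (Ubound k2 thinf theta omega) + k1.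
Hypothesis hk2 : 0 < k2.

Local Notation E := (energy k2 thinf theta omega).
Local Notation U := (Ubound k2 thinf theta omega).
Local Notation m := (min_offdiag thinf).
Local Notation M := (max_offdiag thinf).
Local Notation r := (Num.sqrt (2 * N%:R * energy k2 thinf theta omega 0 / k2)).
Local Notation rhs := (kuramoto_rhs k0 k1 k2 thinf theta omega).
Local Notation p i j t := ((`|theta j t - theta i t| - thinf i j) ^+ 2).

Lemma N_gt0 : (0 < N)%N. Proof. by apply: leq_trans hN. Qed.
Lemma Nr_gt0 : 0 < N%:R :> R. Proof. by rewrite ltr0n N_gt0. Qed.

Ltac slra := have ? := hE0; have ? := hk2; have ? := hk0; have ? := hk1; have ? := Nr_gt0; lra.

Lemma sum_ge_term n (F : 'I_n -> R) i : (forall k, 0 <= F k) -> F i <= \sum_k F k.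
Proof. by move=> H; rewrite (bigD1 i) //= lerDl sumr_ge0. Qed.

Lemma sum_ge_two n (F : 'I_n -> R) i j : i != j -> (forall k, 0 <= F k) ->
  F i + F j <= \sum_k F k.
Proof.
move=> ij H; rewrite (bigD1 i) //= (bigD1 j) /=; last by rewrite eq_sym.
by rewrite addrA lerDl sumr_ge0.
Qed.

Lemma other_index (i : 'I_N) : exists j, i != j.
Proof.
have h0 : (0 < N)%N by apply: leq_trans hN.
have h1 : (1 < N)%N by [].
case: (eqVneq (nat_of_ord i) 0%N) => hi.
  exists (Ordinal h1); apply/eqP => /(congr1 val) /=; rewrite hi //.
exists (Ordinal h0); apply/eqP => /(congr1 val) /=; exact/eqP.
Qed.

Lemma min_off_le i j : i != j -> m <= thinf i j.
Proof.
move=> ij; rewrite /min_offdiag.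
apply: (@bigmin_inf _ _ _ _ i) => //.
exact: (@bigmin_le_cond _ _ _ _ j).
Qed.

Lemma max_off_ge i j : i != j -> thinf i j <= M.
Proof.
move=> ij; rewrite /max_offdiag.
apply: (@bigmax_sup _ _ _ _ i) => //.
exact: (@le_bigmax_cond _ _ _ _ j).
Qed.

Lemma le_maxall i j : thinf i j <= maxall thinf.
Proof.
rewrite /maxall; apply: (@bigmax_sup _ _ _ _ i) => //.
exact: (@le_bigmax_cond _ _ _ _ j).
Qed.

Lemma bigmin_attained (I : finType) (x : R) (j : I) (P : pred I) (F : I -> R) :
  P j -> (forall i, P i -> F i <= x) ->
  exists2 k, P k & \big[Num.min/x]_(i | P i) F i = F k.
Proof.
move=> Pj H; rewrite (bigmin_eq_arg x j P F Pj H).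
by case: (arg_minP F Pj) => k Pk _; exists k.
Qed.

Lemma min_off_attained : exists i j, i != j /\ thinf i j = m.
Proof.
have [i0 _] := other_index (Ordinal N_gt0).
rewrite /min_offdiag.
have [i1 _ ->] := @bigmin_attained _ (maxall thinf) i0 xpredT
  (fun i => \big[Num.min/maxall thinf]_(j < N | i != j) thinf i j) erefl
  (fun i _ => bigmin_le_id _ _ _ _).
have [j0 hj0] := other_index i1.
have [j1 hj1 ->] := @bigmin_attained _ (maxall thinf) j0 (fun j => i1 != j)
  (thinf i1) hj0 (fun j _ => le_maxall i1 j).
by exists i1, j1.
Qed.

Lemma p_sym t i j : p i j t = p j i t.
Proof. by rewrite distrC hsym. Qed.

Lemma E_sum_ge t i j : i != j -> p i j t + p i j t <=
   \sum_(a < N) \sum_(b < N) p a b t.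
Proof.
move=> ij.
have h : forall k, 0 <= \sum_(b < N) p k b t.
  by move=> k; apply: sumr_ge0 => b _; apply: sqr_ge0.
have {}h := @sum_ge_two N (fun a => \sum_(b < N) p a b t) i j ij h.
apply: le_trans h; rewrite /=.
apply: lerD; first by apply: (sum_ge_term _ (fun b => p i b t)) => k; exact: sqr_ge0.
rewrite (p_sym t i j); apply: (sum_ge_term _ (fun b => p j b t)) => k; exact: sqr_ge0.
Qed.

Lemma E_parts_ge0 t : 0 <= \sum_(i < N) omega i t ^+ 2 /\
  0 <= \sum_(a < N) \sum_(b < N) p a b t.
Proof.
split; first by apply: sumr_ge0 => i _; exact: sqr_ge0.
by apply: sumr_ge0 => a _; apply: sumr_ge0 => b _; exact: sqr_ge0.
Qed.

Lemma E_ge0 t : 0 <= E t.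
Proof.
have [h1 h2] := E_parts_ge0 t; have := Nr_gt0 => hN0.
rewrite /energy; apply: addr_ge0; first by apply: mulr_ge0 => //; rewrite invr_ge0.
apply: mulr_ge0 => //; apply: divr_ge0; slra.
Qed.

Lemma E_pair t i j : i != j -> k2 / (2 * N%:R) * p i j t <= E t.
Proof.
move=> ij; have [h1 h2] := E_parts_ge0 t; have := Nr_gt0 => hN0.
have h3 := E_sum_ge t i j ij.
rewrite /energy.
have -> : k2 / (2 * N%:R) * p i j t = k2 / (4 * N%:R) * (p i j t + p i j t).
  by field; rewrite ?pnatr_eq0 -?lt0n ?N_gt0 //; apply/andP; split; slra.
apply: (@le_trans _ _ (k2 / (4 * N%:R) * \sum_(a < N) \sum_(b < N) p a b t)).
  apply: ler_wpM2l => //; apply: divr_ge0; slra.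
rewrite lerDr; apply: mulr_ge0 => //; slra.
Qed.

Lemma E_omega t i : 2^-1 * omega i t ^+ 2 <= E t.
Proof.
have [h1 h2] := E_parts_ge0 t; have := Nr_gt0 => hN0.
rewrite /energy; apply: (@le_trans _ _ (2^-1 * \sum_(i < N) omega i t ^+ 2)).
  apply: ler_wpM2l; first by rewrite invr_ge0.
  by apply: (sum_ge_term _ (fun i => omega i t ^+ 2)) => k; exact: sqr_ge0.
rewrite lerDl; apply: mulr_ge0 => //; apply: divr_ge0; slra.
Qed.

Lemma p_le t i j : i != j -> E t <= E 0 -> p i j t <= r ^+ 2.
Proof.
move=> ij hE; have := Nr_gt0 => hN0; have h := E_pair t i j ij.
have h0 := E_ge0 0.
rewrite sqr_sqrtr; last by apply: divr_ge0; [apply: mulr_ge0|]; slra.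
have e : 2 * N%:R * E 0 / k2 - p i j t
    = (2 * N%:R / k2) * (E 0 - k2 / (2 * N%:R) * p i j t).
  by field; apply/andP; split; slra.
rewrite -subr_ge0 e; apply: mulr_ge0; first by apply: divr_ge0; slra.
slra.
Qed.

Lemma r_ge0 : 0 <= r. Proof. exact: sqrtr_ge0. Qed.

Lemma absp_le t i j : i != j -> E t <= E 0 ->
  `| `|theta j t - theta i t| - thinf i j | <= r.
Proof.
move=> ij hE; have := ler_wsqrtr (p_le t i j ij hE).
by rewrite !sqrtr_sqr (ger0_norm r_ge0).
Qed.

Lemma r_lt_m : 0 < m /\ r < m.
Proof.
have := Nr_gt0 => hN0.
have hr : r < `|m|.
  rewrite -sqrtr_sqr ltr_sqrt; last first.
    rewrite lt0r sqrf_eq0; apply/andP; split; last exact: sqr_ge0.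
    apply/negP => /eqP m0; move: hE0; rewrite m0 expr0n /= mulr0 mul0r.
    by have := E_ge0 0; slra.
  have e : m ^+ 2 - 2 * N%:R * E 0 / k2
      = (2 * N%:R / k2) * (k2 * m ^+ 2 / (2 * N%:R) - E 0).
    by field; apply/andP; split; slra.
  rewrite -subr_gt0 e; apply: mulr_gt0; first by apply: divr_gt0; slra.
  slra.
have [i [j [ij hm]]] := min_off_attained.
have := absp_le 0 i j ij (lexx _); rewrite hm => h.
have hd := normr_ge0 (theta j 0 - theta i 0).
case: (ltP 0 m) => hm0.
  by split => //; rewrite -(gtr0_norm hm0).
exfalso; move: hr; rewrite (ler0_norm hm0) => hr.
move: h; rewrite ger0_norm; slra.
Qed.

Section CvgTools.
Variables (F : set_system R) (FF : Filter F).

Lemma cvgD' (f g : R -> R) (a b : R) : f x @[x --> F] --> a -> g x @[x --> F] --> b ->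
  (f x + g x) @[x --> F] --> a + b.
Proof. exact: cvgD. Qed.
Lemma cvgB' (f g : R -> R) (a b : R) : f x @[x --> F] --> a -> g x @[x --> F] --> b ->
  (f x - g x) @[x --> F] --> a - b.
Proof. exact: cvgB. Qed.
Lemma cvgM' (f g : R -> R) (a b : R) : f x @[x --> F] --> a -> g x @[x --> F] --> b ->
  (f x * g x) @[x --> F] --> a * b.
Proof. exact: cvgM. Qed.
Lemma cvgX2' (f : R -> R) (a : R) : f x @[x --> F] --> a -> (f x ^+ 2) @[x --> F] --> a ^+ 2.
Proof. by move=> h; rewrite expr2; under eq_fun do rewrite expr2; exact: cvgM'. Qed.
Lemma cvgc' (c : R) : (fun _ => c) @ F --> c.
Proof. exact: cvg_cst. Qed.
Lemma cvgabs' (f : R -> R) (a : R) : f x @[x --> F] --> a -> `|f x| @[x --> F] --> `|a|.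
Proof. exact: cvg_norm. Qed.
Lemma cvgcos' (f : R -> R) (a : R) : f x @[x --> F] --> a -> cos (f x) @[x --> F] --> cos a.
Proof. by move=> h; apply: continuous_cvg => //; exact: continuous_cos. Qed.


End CvgTools.

Definition nice (f : R -> R) := forall (F : set_system R), Filter F -> forall a,
  x @[x --> F] --> a -> (forall i, theta i x @[x --> F] --> theta i a) ->
  (forall i, omega i x @[x --> F] --> omega i a) -> f x @[x --> F] --> f a.

Lemma nice_p i j : nice (fun t => p i j t).
Proof.
move=> F FF a hid ht ho.
apply: cvgX2'; apply: cvgB'; last exact: cvgc'.
by apply: cvgabs'; apply: cvgB'.
Qed.

Lemma nice_E : nice E.
Proof.
move=> F FF a hid ht ho; rewrite /energy.
apply: cvgD'; apply: cvgM'; try exact: cvgc'.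
  by apply: cvg_bigsum => i; apply: cvgX2'.
apply: cvg_bigsum => i; apply: cvg_bigsum => j.
exact: nice_p.
Qed.

Lemma nice_a i j : nice (fun t => k0 * cos (theta j t - theta i t) + k1).
Proof.
move=> F FF a hid ht ho.
apply: cvgD'; last exact: cvgc'.
apply: cvgM'; first exact: cvgc'.
by apply: cvgcos'; apply: cvgB'.
Qed.

Lemma nice_d i j : nice (fun t => theta j t - theta i t).
Proof. by move=> F FF a hid ht ho; apply: cvgB'. Qed.

Lemma nice_om i : nice (omega i).
Proof. by move=> F FF a hid ht ho. Qed.

Lemma nice_lin (f : R -> R) (c : R) : nice f -> nice (fun s => f s + c * s).
Proof.
move=> nf F FF a hid ht ho; apply: cvgD'; first exact: nf.
by apply: cvgM' => //; exact: cvgc'.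
Qed.

Lemma nice_opp (f : R -> R) : nice f -> nice (fun s => - f s).
Proof. by move=> nf F FF a hid ht ho; apply: cvgN; exact: nf. Qed.

Lemma nice_omsum : nice (fun t => \sum_(i < N) omega i t).
Proof. by move=> F FF a hid ht ho; apply: cvg_bigsum. Qed.

Lemma nice_omd i j : nice (fun t => omega j t - omega i t).
Proof. by move=> F FF a hid ht ho; apply: cvgB'. Qed.

Lemma th_cont (i : 'I_N) (t : R) : 0 < t -> theta i x @[x --> t] --> theta i t.
Proof.
move=> t0; have h := hdth i t t0.
apply: differentiable_continuous; apply/derivable1_diffP.
exact: ex_derive.
Qed.

Lemma om_cont (i : 'I_N) (t : R) : 0 < t -> omega i x @[x --> t] --> omega i t.
Proof.
move=> t0; have h := hdom i t t0.
apply: differentiable_continuous; apply/derivable1_diffP.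
exact: ex_derive.
Qed.

Lemma nice_cont (f : R -> R) (t : R) : nice f -> 0 < t -> f x @[x --> t] --> f t.
Proof.
move=> nf t0; apply: nf; first exact: cvg_id.
  by move=> i; exact: th_cont.
by move=> i; exact: om_cont.
Qed.

Lemma nice_right (f : R -> R) (t : R) : nice f -> 0 <= t -> f x @[x --> t^'+] --> f t.
Proof.
move=> nf; rewrite le_eqVlt => /predU1P[<-|t0].
  apply: nf; [exact: cvg_at_right_filter cvg_id | exact: hth0 | exact: hom0].
by apply: cvg_at_right_filter; exact: nice_cont.
Qed.

Lemma nice_within (f : R -> R) (x y : R) : nice f -> 0 <= x -> x < y -> {within `[x, y], continuous f}.
Proof.
move=> nf x0 xy; apply/continuous_within_itvP => //; split.
- move=> s; rewrite in_itv /= => /andP[xs sy].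
  by apply: nice_cont => //; exact: le_lt_trans xs.
- exact: nice_right.
- by apply: cvg_at_left_filter; apply: nice_cont => //; exact: le_lt_trans xy.
Qed.
Set Implicit Arguments. Unset Strict Implicit.

Section DerTools.
Variable t : R.
Lemma isdD' (f g : R -> R) (df dg : R) : is_derive t 1 f df -> is_derive t 1 g dg ->
  is_derive t 1 (fun s => f s + g s) (df + dg).
Proof. move=> h1 h2; exact: is_deriveD. Qed.
Lemma isdB' (f g : R -> R) (df dg : R) : is_derive t 1 f df -> is_derive t 1 g dg ->
  is_derive t 1 (fun s => f s - g s) (df - dg).
Proof. move=> h1 h2; exact: is_deriveB. Qed.
Lemma isdM' (f g : R -> R) (df dg : R) : is_derive t 1 f df -> is_derive t 1 g dg ->
  is_derive t 1 (fun s => f s * g s) (f t * dg + g t * df).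
Proof. move=> h1 h2; exact: is_deriveM. Qed.
Lemma isdc' (c : R) : is_derive t 1 (fun _ => c) 0.
Proof. exact: is_derive_cst. Qed.
Lemma isdcM' (c : R) (f : R -> R) (df : R) : is_derive t 1 f df ->
  is_derive t 1 (fun s => c * f s) (c * df).
Proof.
move=> h; have := isdM' (isdc' c) h.
by rewrite mulr0 addr0.
Qed.
Lemma isdid' : is_derive t 1 (fun s => s) 1.
Proof. exact: is_derive_id. Qed.
Lemma isdlin' (c : R) : is_derive t 1 (fun s => c * s) (c * 1).
Proof. exact: isdcM' isdid'. Qed.
Lemma isdsq' (f : R -> R) (df : R) : is_derive t 1 f df ->
  is_derive t 1 (fun s => f s ^+ 2) (2 * f t * df).
Proof.
move=> h; have := isdM' h h.
have -> : f t * df + f t * df = 2 * f t * df by ring.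
by under eq_fun do rewrite -expr2.
Qed.
Lemma isdsum' n (h : 'I_n -> R -> R) (dh : 'I_n -> R) :
  (forall i, is_derive t 1 (h i) (dh i)) ->
  is_derive t 1 (fun s => \sum_(i < n) h i s) (\sum_(i < n) dh i).
Proof.
move=> H; have := is_derive_sum H.
by rewrite fct_sumE.
Qed.
Lemma isdabs' (f : R -> R) (df : R) : is_derive t 1 f df -> f t != 0 ->
  is_derive t 1 (fun s => `|f s|) (Num.sg (f t) * df).
Proof.
move=> h ft0.
have hc : f x @[x --> t] --> f t.
  by apply: differentiable_continuous; apply/derivable1_diffP; exact: ex_derive.
apply: (@near_eq_is_derive _ _ _ (fun s => Num.sg (f t) * f s)).
case: (ltgtP (f t) 0) => [ftn|ftp|/eqP]; last by rewrite (negbTE ft0).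
- have : \forall s \near t, f s < 0 by exact: (cvgr_lt (f t) hc 0 ftn).
  apply: filterS => s hs.
  by rewrite ltr0_sg // ltr0_norm // mulN1r.
- have : \forall s \near t, f s > 0 by exact: (cvgr_gt (f t) hc 0 ftp).
  apply: filterS => s hs.
  by rewrite gtr0_sg // gtr0_norm // mul1r.
Qed.
End DerTools.

Local Notation a_ i j t := (k0 * cos (theta j t - theta i t) + k1).
Local Notation C_ i j t := ((`|theta j t - theta i t| - thinf i j) * Num.sg (theta j t - theta i t)).
Local Notation dp_ i j t := (2 * (`|theta j t - theta i t| - thinf i j) *
   (Num.sg (theta j t - theta i t) * (omega j t - omega i t) - 0)).
Local Notation dEraw t := (2^-1 * (\sum_(i < N) 2 * omega i t * rhs i t) +
   k2 / (4 * N%:R) * (\sum_(i < N) \sum_(j < N) dp_ i j t)).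
Local Notation Ed t := (- (2 * N%:R)^-1 *
   \sum_(i < N) \sum_(j < N) a_ i j t * (omega j t - omega i t) ^+ 2).

Lemma dp (i j : 'I_N) (t : R) : 0 < t -> (i = j \/ theta j t - theta i t != 0) ->
  is_derive t 1 (fun s => p i j s) (dp_ i j t).
Proof.
move=> t0 [<-| hne].
  rewrite subrr sgr0 mul0r subrr mulr0.
  under eq_fun do rewrite subrr.
  exact: isdc'.
apply: isdsq'; apply: (isdB' _ (@isdc' t _)).
apply: isdabs' => //; apply: isdB'; exact: hdth.
Qed.

Lemma dE (t : R) : 0 < t -> (forall i j, i != j -> theta j t - theta i t != 0) ->
  is_derive t 1 E (dEraw t).
Proof.
move=> t0 hne; rewrite /energy.
apply: isdD'; apply: isdcM'; apply: isdsum' => i.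
  by apply: isdsq'; exact: hdom.
apply: isdsum' => j; apply: dp => //.
by case: (eqVneq i j) => [->|/hne]; [left|right].
Qed.

Lemma a_sym i j t : a_ j i t = a_ i j t.
Proof. by rewrite -(opprB (theta j t) (theta i t)) cosN. Qed.

Lemma C_anti i j t : C_ j i t = - C_ i j t.
Proof. by rewrite (distrC (theta i t)) (hsym j i) -(opprB (theta j t) (theta i t)) sgrN mulrN. Qed.

Lemma dE_eq (t : R) : dEraw t = Ed t.
Proof.
have hN0 := Nr_gt0.
have e1 : forall i, rhs i t = \sum_(j < N) (N%:R^-1 * (a_ i j t * (omega j t - omega i t))
     + k2 / N%:R * C_ i j t).
  by move=> i; rewrite /kuramoto_rhs big_split /= -!mulr_sumr.
have e2 : dEraw t = \sum_(i < N) \sum_(j < N) (omega i t * (N%:R^-1 * (a_ i j t * (omega j t - omega i t))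
     + k2 / N%:R * C_ i j t) + k2 / (4 * N%:R) * dp_ i j t).
  rewrite mulr_sumr [X in _ + X]mulr_sumr -big_split /=; apply: eq_bigr => i _.
  rewrite e1 mulr_sumr mulr_sumr mulr_sumr -big_split /=; apply: eq_bigr => j _.
  by rewrite mulrA mulrA mulVf ?mul1r //; apply: lt0r_neq0.
have e3 : Ed t = \sum_(i < N) \sum_(j < N) (- (2 * N%:R)^-1 * (a_ i j t * (omega j t - omega i t) ^+ 2)).
  by rewrite mulr_sumr; apply: eq_bigr => i _; rewrite mulr_sumr.
apply/eqP; rewrite -subr_eq0 e2 e3 -sumrB.
rewrite (eq_bigr (fun i => \sum_(j < N) ((2 * N%:R)^-1 *
   (a_ i j t * (omega j t - omega i t) * (omega i t + omega j t))
   + k2 / (2 * N%:R) * (C_ i j t * (omega i t + omega j t))))); last first.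
  move=> i _; rewrite -sumrB; apply: eq_bigr => j _.
  by field; apply: lt0r_neq0.
rewrite sum_antisym //.
move=> i j; rewrite a_sym C_anti; ring.
Qed.

Definition Good (s : R) := forall i j, i != j ->
  theta j s - theta i s != 0 /\ 0 < a_ i j s.
Definition Qs (s : R) := forall i j, i != j ->
  m - r <= `|theta j s - theta i s| /\ `|theta j s - theta i s| <= U.

Lemma right_eta (T : R) (P : R -> Prop) : (\forall s \near T^'+, P s) ->
  exists2 e, 0 < e & forall s, T < s < T + e -> P s.
Proof.
rewrite /at_right near_withinE => /nbhs_ballP [e /= e0 H].
exists e => // s /andP[Ts sT]; apply: H => //.
rewrite /ball /= ltr0_norm ?subr_lt0 // opprB; by rewrite ltrBlDl.
Qed.

Lemma U_gt0 : 0 < U.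
Proof.
have i := Ordinal N_gt0; have := hS i i; rewrite subrr normr0 => //.
Qed.

Lemma Q_of_E s : E s <= E 0 -> Qs s.
Proof.
move=> hE i j ij; have h := absp_le s i j ij hE.
have h1 := min_off_le i j ij; have h2 := max_off_ge i j ij.
move: h; rewrite ler_norml => /andP[h3 h4]; split.
  by slra.
by rewrite /Ubound; slra.
Qed.

Lemma cos_ge_U x : `|x| <= U -> cos U <= cos x.
Proof.
move=> hx; rewrite -(cos_norm x); have hU := U_gt0; have hpi := hUpi.
rewrite leNgt; apply/negP => h.
have hm := @ltr_cos R U `|x|.
have h' : U < `|x|.
  rewrite -hm; first exact: h.
    by rewrite in_itv /=; slra.
  by rewrite in_itv /= normr_ge0 /=; slra.
slra.
Qed.

Lemma a_ge_U s i j : `|theta j s - theta i s| <= U -> k0 * cos U + k1 <= a_ i j s.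
Proof.
by move=> h; rewrite lerD2r; apply: ler_wpM2l => //; exact: cos_ge_U.
Qed.

Lemma Good_of_Q s : Qs s -> Good s.
Proof.
move=> hQ i j ij; have [h1 h2] := hQ i j ij; have [hm hr] := r_lt_m.
split.
  by rewrite -normr_gt0; slra.
by apply: lt_le_trans (a_ge_U h2).
Qed.

Lemma Ed_le_pair s i j : i != j ->
  (forall a b, a != b -> 0 <= a_ a b s) ->
  Ed s <= - (2 * N%:R)^-1 * (a_ i j s * (omega j s - omega i s) ^+ 2).
Proof.
move=> ij ha; rewrite !mulNr lerN2; apply: ler_wpM2l.
  by rewrite invr_ge0; slra.
have hF : forall a b, 0 <= a_ a b s * (omega b s - omega a s) ^+ 2.
  move=> a b; case: (eqVneq a b) => [->|ab].
    by rewrite !subrr expr2 !mulr0.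
  by apply: mulr_ge0; [exact: ha | exact: sqr_ge0].
apply: (@le_trans _ _ (\sum_(b < N) a_ i b s * (omega b s - omega i s) ^+ 2)).
  exact: (sum_ge_term _ (fun b => a_ i b s * (omega b s - omega i s) ^+ 2)).
apply: (sum_ge_term _ (fun a => \sum_(b < N) a_ a b s * (omega b s - omega a s) ^+ 2)).
by move=> a; apply: sumr_ge0.
Qed.

Lemma Ed_le0 s : (forall a b, a != b -> 0 <= a_ a b s) -> Ed s <= 0.
Proof.
move=> ha; have [j ij] := other_index (Ordinal N_gt0).
apply: le_trans (Ed_le_pair ij ha) _.
rewrite mulNr oppr_le0; apply: mulr_ge0; first by rewrite invr_ge0; slra.
by apply: mulr_ge0; [exact: ha | exact: sqr_ge0].
Qed.

Lemma Good_a s : Good s -> forall a b, a != b -> 0 <= a_ a b s.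
Proof. by move=> g a b ab; have [_ /ltW] := g a b ab. Qed.

Lemma E_mono x y (k : R) : 0 <= x -> x <= y ->
  (forall s, x < s < y -> Good s /\ Ed s + k <= 0) ->
  E y + k * y <= E x + k * x.
Proof.
move=> x0; rewrite le_eqVlt => /predU1P[<-|xy] H; first by [].
apply: (@mono_deriv _ (fun s => E s + k * s) (fun s => Ed s + k * 1)) => //.
  exact: ltW.
- move=> s hs; have [g hk] := H s hs.
  have s0 : 0 < s by move: hs => /andP[h _]; exact: le_lt_trans h.
  split; last by rewrite mulr1.
  apply: (isdD' _ (isdlin' s k)).
  rewrite -dE_eq; apply: dE => // a b ab; by have [] := g a b ab.
- apply: nice_within => //; apply: nice_lin; exact: nice_E.
Qed.

Lemma good_open T : 0 <= T -> Good T ->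
  exists2 e, 0 < e & forall s, T < s < T + e -> Good s.
Proof.
move=> T0 GT; apply: right_eta.
apply: filter_forall => i; apply: filter_forall => j.
case: (eqVneq i j) => [->|ij].
  by apply: nearW.
have [h1 h2] := GT i j ij.
have hc := nice_right _ _ (nice_d i j) T0.
have H1 : \forall s \near T^'+, theta j s - theta i s != 0.
  case: (ltgtP (theta j T - theta i T) 0) => [hl|hg|he]; last by rewrite he eqxx in h1.
  - by apply: filterS (cvgr_lt _ hc 0 hl) => s hs; rewrite neq_lt hs.
  - by apply: filterS (cvgr_gt _ hc 0 hg) => s hs; rewrite neq_lt hs orbT.
have H2 : \forall s \near T^'+, 0 < a_ i j s.
  exact: (cvgr_gt _ (nice_right _ _ (nice_a i j) T0) 0 h2).
by apply: (filterS2 _ _ H1 H2) => s g1 g2 _; split.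
Qed.

Lemma E_le_E0 t : 0 <= t -> E t <= E 0.
Proof.
move=> t0; rewrite leNgt; apply/negP => hlt.
pose A := [set s : R | 0 <= s /\ E 0 < E s].
have hlb0 : lbound A 0 by move=> s [].
have hlb : has_lbound A by exists 0.
have hne : nonempty A by exists t.
set T := inf A.
have T0 : 0 <= T := lb_le_inf hne hlb0.
have F1 : forall s, 0 <= s -> s < T -> E s <= E 0.
  move=> s s0 sT; rewrite leNgt; apply/negP => h.
  have := ge_inf hlb (conj s0 h); rewrite -/T => hT.
  by move: sT; rewrite ltNge hT.
have GLT : forall s, 0 <= s -> s < T -> Good s.
  by move=> s s0 sT; apply: Good_of_Q; apply: Q_of_E; exact: F1.
have mono0 : forall y, 0 <= y -> (forall s, 0 < s < y -> Good s) -> E y <= E 0.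
  move=> y y0 H; have := @E_mono 0 y 0 (lexx 0) y0.
  rewrite !mul0r !addr0; apply => s hs; split; first exact: H.
  by rewrite addr0; apply: Ed_le0; apply: Good_a; exact: H.
have ET : E T <= E 0.
  apply: mono0 => // s /andP[s0 sT]; apply: GLT => //; exact: ltW.
have GT : Good T by apply: Good_of_Q; exact: Q_of_E.
have [e e0 He] := good_open T0 GT.
have F4 : forall s, 0 <= s -> s < T + e -> E s <= E 0.
  move=> s s0 se; apply: mono0 => // u /andP[u0 us].
  case: (ltgtP u T) => [uT|Tu|->] //.
  - by apply: GLT => //; exact: ltW.
  - by apply: He; rewrite Tu /=; exact: lt_trans se.
have : T + e <= T.
  rewrite {2}/T; apply: (@lb_le_inf R A (T + e) hne) => s [s0 hs].
  rewrite leNgt; apply/negP => h; have := F4 s s0 h.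
  by rewrite leNgt hs.
by have := e0; slra.
Qed.

Lemma Q_all t : 0 <= t -> Qs t.
Proof. by move=> t0; apply: Q_of_E; exact: E_le_E0. Qed.

Lemma Good_all t : 0 <= t -> Good t.
Proof. by move=> t0; apply: Good_of_Q; exact: Q_all. Qed.

Lemma E_nonincr x y : 0 <= x -> x <= y -> E y <= E x.
Proof.
move=> x0 xy; have := @E_mono x y 0 x0 xy.
rewrite !mul0r !addr0; apply => s /andP[xs sy].
have s0 : 0 <= s by apply: le_trans (ltW xs).
split; first exact: Good_all.
by rewrite addr0; apply: Ed_le0; apply: Good_a; exact: Good_all.
Qed.

Lemma sum_cst (b : R) : \sum_(j < N) b = N%:R * b.
Proof. by rewrite sumr_const card_ord mulr_natl. Qed.

Lemma avg_bound (F : 'I_N -> R) (b : R) : (forall j, `|F j| <= b) ->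
  `|N%:R^-1 * \sum_(j < N) F j| <= b.
Proof.
move=> H; have hN0 := Nr_gt0.
rewrite normrM ger0_norm; last by rewrite invr_ge0; slra.
apply: (@le_trans _ _ (N%:R^-1 * \sum_(j < N) b)).
  apply: ler_wpM2l; first by rewrite invr_ge0; slra.
  apply: le_trans (ler_norm_sum _ _ _) _.
  by apply: ler_sum => j _; exact: H.
by rewrite sum_cst mulrA mulVf ?mul1r //; apply: lt0r_neq0.
Qed.

Local Notation W := (Num.sqrt (2 * E 0)).

Lemma om_bound i t : 0 <= t -> `|omega i t| <= W.
Proof.
move=> t0; have h1 := E_omega t i; have h2 := E_le_E0 t0.
rewrite -sqrtr_sqr; apply: ler_wsqrtr; slra.
Qed.

Local Notation B := ((k0 + k1) * (2 * W) + k2 * r).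

Lemma rhs_sum i t : rhs i t = N%:R^-1 * \sum_(j < N) (a_ i j t * (omega j t - omega i t))
   + k2 * (N%:R^-1 * \sum_(j < N) C_ i j t).
Proof. by rewrite /kuramoto_rhs mulrA. Qed.

Lemma rhs_bound i t : 0 <= t -> `|rhs i t| <= B.
Proof.
move=> t0; rewrite rhs_sum; apply: le_trans (ler_normD _ _) _.
apply: lerD.
  apply: avg_bound => j; rewrite normrM.
  apply: ler_pM; [exact: normr_ge0 | exact: normr_ge0 | |].
    apply: le_trans (ler_normD _ _) _; rewrite normrM (ger0_norm hk0) (ger0_norm hk1).
    rewrite lerD2r; apply: ler_piMr => //; exact: cos_max.
  apply: le_trans (ler_normB _ _) _.
  by have := om_bound j t0; have := om_bound i t0; slra.
rewrite normrM (ger0_norm (ltW hk2)); apply: ler_wpM2l; first slra.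
apply: avg_bound => j; case: (eqVneq i j) => [->|ij].
  by rewrite subrr sgr0 mulr0 normr0; exact: r_ge0.
rewrite normrM; apply: (@le_trans _ _ (r * 1)); last by rewrite mulr1.
apply: ler_pM; [exact: normr_ge0 | exact: normr_ge0 | |].
  exact: absp_le (E_le_E0 t0).
by rewrite normr_sg; case: (_ != 0).
Qed.

Lemma lip (f df : R -> R) (Bd : R) : nice f ->
  (forall s : R, 0 < s -> is_derive s 1 f (df s)) ->
  (forall s : R, 0 < s -> `|df s| <= Bd) ->
  forall x y : R, 0 <= x -> x <= y -> `|f y - f x| <= Bd * (y - x).
Proof.
move=> nf hd hb x y x0; rewrite le_eqVlt => /predU1P[<-|xy].
  by rewrite !subrr normr0 mulr0.
have sp : forall s : R, x < s < y -> 0 < s.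
  by move=> s /andP[xs _]; exact: le_lt_trans xs.
have h1 : f y + (- Bd) * y <= f x + (- Bd) * x.
  apply: (@mono_deriv _ (fun s : R => f s + (- Bd) * s) (fun s : R => df s + (- Bd) * 1)).
  - exact: ltW.
  - move=> s hs; split; first exact: (isdD' (hd s (sp s hs)) (isdlin' s (- Bd))).
    have := hb s (sp s hs); rewrite ler_norml => /andP[_ h]; slra.
  - by apply: nice_within => //; apply: nice_lin.
have h2 : - f y + (- Bd) * y <= - f x + (- Bd) * x.
  apply: (@mono_deriv _ (fun s : R => - f s + (- Bd) * s) (fun s : R => - df s + (- Bd) * 1)).
  - exact: ltW.
  - move=> s hs; split.
      exact: (isdD' (is_deriveN (hd s (sp s hs))) (isdlin' s (- Bd))).
    have := hb s (sp s hs); rewrite ler_norml => /andP[h _]; slra.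
  - by apply: nice_within => //; apply: nice_lin; apply: nice_opp.
rewrite ler_norml; apply/andP; split; slra.
Qed.

Lemma B_ge0 : 0 <= B.
Proof.
have i := Ordinal N_gt0.
exact: le_trans (normr_ge0 _) (rhs_bound i (lexx 0)).
Qed.

Lemma g_lip i j x y : 0 <= x -> x <= y ->
  `|(omega j y - omega i y) - (omega j x - omega i x)| <= (B + B) * (y - x).
Proof.
apply: (@lip (fun s => omega j s - omega i s) (fun s => rhs j s - rhs i s)).
- exact: nice_omd.
- by move=> s s0; apply: isdB'; exact: hdom.
- move=> s s0; apply: le_trans (ler_normB _ _) _.
  by apply: lerD; apply: rhs_bound; exact: ltW.
Qed.

Lemma pair_to0 i j : i != j -> forall eps : R, 0 < eps ->
  \forall t \near +oo, `|omega j t - omega i t| < eps.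
Proof.
move=> ij eps e0.
have hB := B_ge0.
pose L := B + B.
have L0 : 0 <= L by rewrite /L; slra.
pose d := eps / (2 * (L + 1)).
have d0 : 0 < d by rewrite /d; apply: divr_gt0 => //; slra.
have Ld : L * d <= eps / 2.
  have e : eps / 2 - L * d = eps / (2 * (L + 1)).
    by rewrite /d; field; do ?[apply/andP; split]; apply: lt0r_neq0; slra.
  rewrite -subr_ge0 e; apply: divr_ge0; slra.
pose cU := k0 * cos U + k1.
have cU0 : 0 < cU := hpos.
pose kap := cU * (eps ^+ 2 / 4) / (2 * N%:R).
have kap0 : 0 < kap.
  rewrite /kap; apply: divr_gt0; last by have := Nr_gt0; slra.
  apply: mulr_gt0 => //; apply: divr_gt0; [exact: exprn_gt0 | slra].
pose A := E @` [set s : R | 0 <= s].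
have hlb : has_lbound A by exists 0 => _ [s _ <-]; exact: E_ge0.
have hinf : has_inf A.
  split; last exact: hlb.
  by exists (E 0); apply: imageP; rewrite /=.
have [_ [x0 x00 <-] hx0] := inf_adherent (mulr_gt0 kap0 d0) hinf.
exists x0; split; first exact: num_real.
move=> x hx; rewrite ltNge; apply/negP => hge.
have x0' : 0 <= x by apply: le_trans (ltW hx).
have gs : forall s, x <= s <= x + d -> eps / 2 <= `|omega j s - omega i s|.
  move=> s /andP[xs sd]; have := g_lip i j x0' xs.
  have hsd : (B + B) * (s - x) <= L * d.
    by apply: ler_wpM2l => //; slra.
  have h1 := ler_normD ((omega j x - omega i x) - (omega j s - omega i s)) (omega j s - omega i s).
  rewrite subrK in h1.
  rewrite distrC => h2; slra.
have xd : x <= x + d by rewrite lerDl ltW.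
have H : forall s, x < s < x + d -> Good s /\ Ed s + kap <= 0.
  move=> s /andP[xs sd]; have s0 : 0 <= s by apply: le_trans x0' (ltW xs).
  split; first exact: Good_all.
  have hp := Ed_le_pair ij (Good_a (Good_all s0)).
  have ha : cU <= a_ i j s by apply: a_ge_U; have [] := Q_all s0 ij.
  have hg : eps / 2 <= `|omega j s - omega i s| by apply: gs; rewrite !ltW.
  have hg2 : eps ^+ 2 / 4 <= (omega j s - omega i s) ^+ 2.
    rewrite -(real_normK (num_real (omega j s - omega i s))).
    have -> : eps ^+ 2 / 4 = (eps / 2) * (eps / 2) by field.
    by rewrite expr2; apply: ler_pM => //; slra.
  have hag : cU * (eps ^+ 2 / 4) <= a_ i j s * (omega j s - omega i s) ^+ 2.
    apply: ler_pM => //; [exact: ltW | apply: divr_ge0; [exact: sqr_ge0 | slra]].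
  have hN2 : 0 <= (2 * N%:R : R)^-1 by rewrite invr_ge0; slra.
  have := ler_wpM2l hN2 hag.
  have -> : kap = (2 * N%:R)^-1 * (cU * (eps ^+ 2 / 4)) by rewrite /kap mulrC.
  move: hp; rewrite mulNr => hp h; slra.
have hm := @E_mono x (x + d) kap x0' xd H.
rewrite mulrDr in hm.
have h1 : E x <= E x0 := E_nonincr x00 (ltW hx).
have h2 : inf A <= E (x + d).
  apply: (ge_inf hlb); apply: imageP; rewrite /=; slra.
slra.
Qed.

Lemma all_pairs (eps : R) : 0 < eps ->
  \forall t \near +oo, forall i j, `|omega j t - omega i t| < eps.
Proof.
move=> e0; apply: filter_forall => i; apply: filter_forall => j.
case: (eqVneq i j) => [->|ij].
  by apply: nearW => t; rewrite subrr normr0.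
exact: pair_to0.
Qed.

Lemma rhs_total t : \sum_(i < N) rhs i t = 0.
Proof.
rewrite (eq_bigr (fun i => \sum_(j < N) (N%:R^-1 * (a_ i j t * (omega j t - omega i t))
     + k2 / N%:R * C_ i j t))); last first.
  by move=> i _; rewrite /kuramoto_rhs big_split /= -!mulr_sumr.
apply: sum_antisym => i j; rewrite a_sym C_anti; ring.
Qed.

Lemma omsum0 : \sum_(i < N) omega i 0 = 0 -> forall t, 0 <= t ->
  \sum_(i < N) omega i t = 0.
Proof.
move=> h0 t t0.
have hd : forall s : R, 0 < s -> is_derive s 1 (fun s => \sum_(i < N) omega i s)
    (\sum_(i < N) rhs i s).
  by move=> s s0; apply: isdsum' => i; exact: hdom.
have hb : forall s : R, 0 < s -> `|\sum_(i < N) rhs i s| <= 0.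
  by move=> s s0; rewrite rhs_total normr0.
have := @lip _ _ 0 nice_omsum hd hb 0 t (lexx 0) t0.
by rewrite mul0r h0 subr0 normr_le0 => /eqP.
Qed.

Lemma main_i : max_diff (fun i => omega i t) @[t --> +oo] --> 0.
Proof.
apply/cvgr0Pnorm_lt => eps e0.
apply: filterS (all_pairs e0) => t H.
rewrite ger0_norm; last by rewrite /max_diff bigmax_ge_id.
rewrite /max_diff; apply: bigmax_lt => // i _; apply: bigmax_lt => // j _.
all: exact: H.
Qed.

Lemma main_ii : \sum_(i < N) omega i 0 = 0 ->
  max_abs (fun i => omega i t) @[t --> +oo] --> 0.
Proof.
move=> h0; apply/cvgr0Pnorm_lt => eps e0.
have e2 : 0 < eps / 2 by apply: divr_gt0.
have hpos0 : \forall t \near +oo, (0 : R) <= t.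
  by exists 0; split; [exact: num_real | move=> x hx; exact: ltW].
apply: (filterS2 _ _ (all_pairs e2) hpos0) => t H t0.
rewrite ger0_norm; last by rewrite /max_abs bigmax_ge_id.
rewrite /max_abs; apply: bigmax_lt => // i _.
have e : omega i t = N%:R^-1 * \sum_(j < N) (omega i t - omega j t).
  rewrite sumrB omsum0 // subr0 sum_cst mulrA mulVf ?mul1r //.
  by apply: lt0r_neq0; exact: Nr_gt0.
rewrite e; apply: le_lt_trans (_ : eps / 2 < eps); last by slra.
by apply: avg_bound => j; rewrite distrC; apply: ltW; exact: H.
Qed.

Lemma main_all : (max_diff (fun i => omega i t) @[t --> +oo] --> 0) /\
  ((\sum_(i < N) omega i 0 = 0) ->
     max_abs (fun i => omega i t) @[t --> +oo] --> 0).
Proof. split; [exact: main_i | exact: main_ii]. Qed.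
End Main.

Theorem theorem3p2 (R : realType) (N : nat) (k0 k1 k2 : R)
  (thinf : 'I_N -> 'I_N -> R) (theta omega : 'I_N -> R -> R) :
  (2 <= N)%N ->
  0 <= k0 -> 0 <= k1 ->
  (forall i j, thinf i j = thinf j i) ->
  (forall i, thinf i i = 0) ->
  (* global solution on [0, +oo) *)
  (forall i, theta i x @[x --> 0^'+] --> theta i 0) ->
  (forall i, omega i x @[x --> 0^'+] --> omega i 0) ->
  (forall (i : 'I_N) (t : R), 0 < t -> is_derive t 1 (theta i) (omega i t)) ->
  (forall (i : 'I_N) (t : R), 0 < t ->
     is_derive t 1 (omega i) (kuramoto_rhs k0 k1 k2 thinf theta omega i t)) ->
  (* (Theta^0, W^0) \in S *)
  (forall i j, `|theta i 0 - theta j 0| < Ubound k2 thinf theta omega) ->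
  Ubound k2 thinf theta omega < pi ->
  energy k2 thinf theta omega 0 < k2 * (min_offdiag thinf) ^+ 2 / (2 * N%:R) ->
  0 < k0 * cos (Ubound k2 thinf theta omega) + k1 ->
  0 < k2 ->
  (max_diff (fun i => omega i t) @[t --> +oo] --> 0) /\
  ((\sum_(i < N) omega i 0 = 0) ->
     max_abs (fun i => omega i t) @[t --> +oo] --> 0).
Proof.
move=> hN hk0 hk1 hsym hdiag hth0 hom0 hdth hdom hS hUpi hE0 hpos hk2.
apply: (@main_all R N k0 k1 k2 thinf theta omega); assumption.
Qed.
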